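(* Let $S$ be an investment strategy with parameter space $\mathbb W=\mathcal W_k^\ell$ satisfying condition $(\mathrm L_\varepsilon)$ for some $\varepsilon\in(0,1)$. For each $t\ge0$ let $\zeta_t=\mathcal R_t/\int_{\mathbb W}\mathcal R_t\,d\mu$ and let $\bar\zeta_t$ be any probability density with respect to $\mu$ on $\mathbb W$ satisfying $\int_{\mathbb W}|\zeta_t-\bar\zeta_t|\,d\mu\le\frac{\varepsilon^2}{4m(t+1)^4}$. Let $\bar{\mathcal U}(S)$ be the parameter-free strategy with $\bar{\mathcal U}_t(S)=\int_{\mathbb W}S_t(\mathbf w)\bar\zeta_t(\mathbf w)\,d\mu(\mathbf w)$. Then (1) $\mathcal R_n(\bar{\mathcal U}(S))\ge(1-\varepsilon)\mathcal R_n(\mathcal U(S))$ for all $n\ge0$; (2) if $\mathcal U(S)$ is a universalization of $S$, then so is $\bar{\mathcal U}(S)$.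
   Context: Let $m\ge2$ and let $\mathbf x_0,\mathbf x_1,\dots\in(0,\infty)^m$ be return vectors. $\mathcal W_k=\{\mathbf w\in[0,1]^k:\sum_i w_i=1\}$. An investment strategy $S$ with parameter space $\mathbb W=\mathcal W_k^\ell$ assigns to each $t\ge0$, $\mathbf w\in\mathbb W$ a description $S_t(\mathbf w)\in\mathcal W_m$, measurable in $\mathbf w$; $\mathcal R_n(\mathbf w)=\prod_{t=0}^{n-1}S_t(\mathbf w)\cdot\mathbf x_t$ ($\mathcal R_0\equiv1$), $\mathcal L_n(S(\mathbf w))=\frac1n\log\mathcal R_n(\mathbf w)$; for parameter-free $U$, $\mathcal R_n(U)=\prod_{t<n}U_t\cdot\mathbf x_t$, $\mathcal L_n(U)=\frac1n\log\mathcal R_n(U)$. $\mu$ is the uniform probability measure on $\mathbb W$, and $\mathcal U(S)$ has $\mathcal U_t(S)=\int_{\mathbb W}S_t\mathcal R_t\,d\mu/\int_{\mathbb W}\mathcal R_t\,d\mu$. $U$ is a universalization of $S$ if there is $\eta_n\to0$, independent of market data, with $\mathcal L_n(U)\ge\sup_{\mathbf w}\mathcal L_n(S(\mathbf w))-\eta_n$ for all $n$ and all market sequences. Condition $(\mathrm L_\varepsilon)$: $S_{ti}(\mathbf w)\ge\frac{\varepsilon}{2m(t+1)^2}$ for all $t\ge0$, $1\le i\le m$, $\mathbf w\in\mathbb W$. *)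

(* Defs.v *)
From HB Require Import structures.
From mathcomp Require Import all_boot all_order all_algebra.
From mathcomp Require Import all_classical all_reals all_analysis.
Set Warnings "-notation-overridden,-ambiguous-paths,-notation-incompatible-prefix".
Import Order.TTheory GRing.Theory Num.Theory.
Import numFieldNormedType.Exports.
Local Open Scope classical_set_scope.
Local Open Scope ring_scope.

Section Defs.
Variable R : realType.

Definition simplex (k : nat) : set (k.-tuple R) :=
  [set w | (forall i, 0 <= tnth w i <= 1) /\ \sum_(i < k) tnth w i = 1].

Definition fsimplex (m : nat) : set ('I_m -> R) :=
  [set v | (forall i, 0 <= v i <= 1) /\ \sum_(i < m) v i = 1].

Definition paramW (k l : nat) : set (l.-tuple (k.-tuple R)) :=
  [set w | forall j, simplex k (tnth w j)].

(* Iterated Lebesgue integral over R^n of a function of n real coordinates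
   (coordinates are passed as a sequence). *)
Fixpoint iint (n : nat) (f : seq R -> \bar R) : \bar R :=
  match n with
  | 0 => f [::]
  | n'.+1 => (\int[lebesgue_measure]_x iint n' (fun s => f (x :: s)))%E
  end.

Definition leb (n : nat) (A : set (seq R)) : \bar R :=
  iint n (fun s => (\1_A s)%:E).

(* Chart of W_k^l: coordinates (w_{j,0},...,w_{j,k-2})_{j<l} in R^(l*(k-1)),
   the last coordinate of each block being 1 - (sum of the others). *)
Definition chart (k l : nat) (s : seq R) : l.-tuple (k.-tuple R) :=
  [tuple [tuple (if (i < k.-1)%N then nth 0 s (j * k.-1 + i)
                 else 1 - \sum_(i' < k.-1) nth 0 s (j * k.-1 + i'))
         | i < k] | j < l].

(* The domain of the chart (a product of l standard corner simplices). *)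
Definition chartD (k l : nat) : set (seq R) :=
  [set s | (forall n, 0 <= nth 0 s n) /\
           (forall j, (j < l)%N -> \sum_(i < k.-1) nth 0 s (j * k.-1 + i) <= 1)].

(* mu is the uniform probability measure on W_k^l: the normalized
   (l*(k-1))-dimensional Lebesgue measure transported by the chart. *)
Definition uniform_param (k l : nat)
    (mu : probability (l.-tuple (k.-tuple R)) R) : Prop :=
  forall A : set (l.-tuple (k.-tuple R)), measurable A ->
    (mu A * leb (l * k.-1) (chartD k l) =
     leb (l * k.-1) (chartD k l `&` chart k l @^-1` A))%E.

Variables (m k l : nat).
Notation P := (l.-tuple (k.-tuple R)).
Notation market := (nat -> 'I_m -> R).

Definition pos_market (x : market) : Prop := forall t i, 0 < x t i.

Definition is_strategy (S : nat -> P -> 'I_m -> R) : Prop :=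
  (forall t w, paramW k l w -> fsimplex m (S t w)) /\
  (forall t i, measurable_fun (paramW k l) (fun w => S t w i)).

Definition condL (eps : R) (S : nat -> P -> 'I_m -> R) : Prop :=
  forall t i w, paramW k l w -> eps / (2 * m%:R * (t%:R + 1) ^+ 2) <= S t w i.

Definition dot (v y : 'I_m -> R) : R := \sum_(i < m) v i * y i.

Definition wealth (S : nat -> P -> 'I_m -> R) (x : market) (n : nat) (w : P) : R :=
  \prod_(t < n) dot (S t w) (x t).

Definition wealthU (U : nat -> 'I_m -> R) (x : market) (n : nat) : R :=
  \prod_(t < n) dot (U t) (x t).

Definition growth (r : R) (n : nat) : R := n%:R^-1 * ln r.

Definition univ (mu : probability P R) (S : nat -> P -> 'I_m -> R) (x : market)
    : nat -> 'I_m -> R :=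
  fun t i => Rintegral mu (paramW k l) (fun w => S t w i * wealth S x t w) /
             Rintegral mu (paramW k l) (fun w => wealth S x t w).

Definition zeta (mu : probability P R) (S : nat -> P -> 'I_m -> R) (x : market)
    (t : nat) (w : P) : R :=
  wealth S x t w / Rintegral mu (paramW k l) (fun w => wealth S x t w).

Definition univbar (mu : probability P R) (S : nat -> P -> 'I_m -> R)
    (zb : nat -> P -> R) : nat -> 'I_m -> R :=
  fun t i => Rintegral mu (paramW k l) (fun w => S t w i * zb t w).

Definition prob_density (mu : probability P R) (zb : P -> R) : Prop :=
  measurable_fun (paramW k l) zb /\
  (forall w, paramW k l w -> 0 <= zb w) /\
  (\int[mu]_(w in paramW k l) (zb w)%:E = 1)%E.

Definition universalization (S : nat -> P -> 'I_m -> R)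
    (U : market -> nat -> 'I_m -> R) : Prop :=
  exists eta : nat -> R, eta @ \oo --> 0 /\
    forall x, pos_market x -> forall n, (0 < n)%N ->
      growth (wealthU (U x) x n) n >=
      sup [set growth (wealth S x n w) n | w in paramW k l] - eta n.

End Defs.

Arguments simplex {R} k.
Arguments fsimplex {R} m.
Arguments paramW {R} k l.
Arguments iint {R} n f.
Arguments leb {R} n A.
Arguments chart {R} k l s.
Arguments chartD {R} k l.
Arguments uniform_param {R k l} mu.
Arguments pos_market {R m} x.
Arguments is_strategy {R m k l} S.
Arguments condL {R m k l} eps S.
Arguments dot {R m} v y.
Arguments wealth {R m k l} S x n w.
Arguments wealthU {R m} U x n.
Arguments growth {R} r n.
Arguments univ {R m k l} mu S x t i.
Arguments zeta {R m k l} mu S x t w.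
Arguments univbar {R m k l} mu S zb t i.
Arguments prob_density {R k l} mu zb.
Arguments universalization {R m k l} S U.

(* Main.v *)
Require Import Defs.
Set Warnings "-all".
From HB Require Import structures.
From mathcomp Require Import all_boot all_order all_algebra.
From mathcomp Require Import all_classical all_reals all_analysis.
From mathcomp Require Import ring lra.
Import Order.TTheory GRing.Theory Num.Theory.
Import numFieldNormedType.Exports.
Local Open Scope classical_set_scope.
Local Open Scope ring_scope.


Lemma preimT_meas d1 d2 (T1 : measurableType d1) (T2 : measurableType d2)
  (f : T1 -> T2) (B : set T2) :
  measurable_fun setT f -> measurable B -> measurable (f @^-1` B).
Proof. by move=> mf mB; rewrite -[_ @^-1` _]setTI; apply: mf. Qed.

Lemma simplex_meas (R : realType) (k : nat) : measurable (@simplex R k).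
Proof.
have -> : @simplex R k = (\bigcap_(i in [set: 'I_k]) ((fun w : k.-tuple R => tnth w i) @^-1` `[0, 1]))
   `&` ((fun w : k.-tuple R => \sum_(i < k) tnth w i) @^-1` [set 1]).
  apply/seteqP; split => w /=.
    by move=> [H1 H2]; split => // i _ /=; rewrite in_itv /= H1.
  by move=> [H1 H2]; split => // i; have := H1 i I; rewrite /= in_itv.
apply: measurableI.
  apply: fin_bigcap_measurable; first exact: finite_finset.
  by move=> i _; apply: preimT_meas => //; exact: measurable_tnth.
apply: preimT_meas => //; apply: measurable_sum => i; exact: measurable_tnth.
Qed.

Lemma paramW_meas (R : realType) (k l : nat) : measurable (@paramW R k l).
Proof.
have -> : @paramW R k l = \bigcap_(j in [set: 'I_l]) ((fun w : l.-tuple (k.-tuple R) => tnth w j) @^-1` simplex k).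
  apply/seteqP; split => w /= H j. by move=> _; exact: H. exact: (H j I).
apply: fin_bigcap_measurable; first exact: finite_finset.
by move=> j _; apply: preimT_meas; [exact: measurable_tnth | exact: simplex_meas].
Qed.

Lemma bnd_int (R : realType) d (T : measurableType d) (mu : probability T R)
  (D : set T) (f : T -> R) (M : R) : measurable D ->
  measurable_fun D f -> (forall w, D w -> `|f w| <= M) ->
  mu.-integrable D (EFin \o f).
Proof.
move=> mD mf fM.
apply: (le_integrable mD (g := EFin \o cst M)).
- exact/measurable_realfun.measurable_EFinP.
- move=> w Dw /=; rewrite lee_fin.
  by apply: (le_trans (fM w Dw)); exact: ler_norm.
- exact: finite_measure_integrable_cst.
Qed.

Lemma dens_int (R : realType) d (T : measurableType d) (mu : probability T R)
  (D : set T) (f : T -> R) : measurable D ->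
  measurable_fun D f -> (forall w, D w -> 0 <= f w) ->
  (\int[mu]_(w in D) (f w)%:E = 1)%E ->
  mu.-integrable D (EFin \o f).
Proof.
move=> mD mf f0 f1; apply/integrableP; split; first exact/measurable_realfun.measurable_EFinP.
rewrite (eq_integral (fun w => (f w)%:E)); first by rewrite f1 ltry.
by move=> w /set_mem Dw /=; rewrite ger0_norm // f0.
Qed.

Lemma dens_pos (R : realType) d (T : measurableType d) (mu : probability T R)
  (D : set T) (f : T -> R) : measurable D ->
  measurable_fun D f -> (forall w, D w -> 0 <= f w) ->
  (\int[mu]_(w in D) (f w)%:E = 1)%E -> 0 < fine (mu D).
Proof.
move=> mD mf f0 f1.
have h1 : (mu D <= 1)%E by exact: probability_le1.
have h0 : mu D <> 0%E.
  move=> mu0.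
  have := @integral_abs_eq0 _ _ _ mu _ (EFin \o f) mD ((measurable_realfun.measurable_EFinP _ _).2 mf) mu0.
  rewrite (eq_integral (fun w => (f w)%:E)); first by rewrite f1 => /eqP; rewrite eqe oner_eq0.
  by move=> w /set_mem Dw /=; rewrite ger0_norm // f0.
have r0 : (0 <= mu D)%E by exact: measure_ge0.
move: h0 h1 r0; case: (mu D) => [r| |] //= rn0 r1 r0.
rewrite lee_fin in r0; rewrite lt_neqAle r0 andbT eq_sym.
apply/eqP => r00; apply: rn0; by rewrite r00.
Qed.

Lemma mul_le_abs (R : realDomainType) (s d : R) : 0 <= s <= 1 -> s * d <= `|d|.
Proof.
move=> /andP[s0 s1]; apply: (le_trans (ler_wpM2l s0 (ler_norm d))).
exact: ler_piMl.
Qed.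

Lemma dot_bounds (R : realType) (m : nat) (v y : 'I_m -> R) (j0 : 'I_m) :
  (forall j, 0 <= v j <= 1) -> (forall j, 0 < y j) ->
  v j0 * y j0 <= dot v y <= \sum_(j < m) y j.
Proof.
move=> hv hy; apply/andP; split.
  rewrite /dot (bigD1 j0) //= lerDl; apply: sumr_ge0 => j _.
  by have /andP[? _] := hv j; apply: mulr_ge0 => //; exact: ltW.
rewrite /dot; apply: ler_sum => j _; have /andP[? ?] := hv j.
by apply: ler_piMl => //; exact: ltW.
Qed.

Lemma intB_EFin (R : realType) d (T : measurableType d) (mu : measure T R)
  (D : set T) (f g : T -> R) : measurable D ->
  mu.-integrable D (EFin \o f) -> mu.-integrable D (EFin \o g) ->
  mu.-integrable D (EFin \o (fun w => f w - g w)).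
Proof.
move=> mD fi gi; apply: (le_integrable mD _ _ (integrableB mD fi gi)).
  apply/measurable_realfun.measurable_EFinP.
  apply: measurable_realfun.measurable_funB.
    by apply/measurable_realfun.measurable_EFinP; case/integrableP: fi.
  by apply/measurable_realfun.measurable_EFinP; case/integrableP: gi.
by move=> w Dw /=.
Qed.

Lemma step (R : realType) (m k l : nat) (hm : (2 <= m)%N)
  (S : nat -> l.-tuple (k.-tuple R) -> 'I_m -> R) (HS : is_strategy S)
  (eps : R) (heps : 0 < eps < 1) (HL : condL eps S)
  (mu : probability (l.-tuple (k.-tuple R)) R)
  (x : nat -> 'I_m -> R) (Hx : pos_market x)
  (zb : nat -> l.-tuple (k.-tuple R) -> R) (t : nat)
  (Hd : prob_density mu (zb t))
  (Hi : (\int[mu]_(w in paramW k l) (`|zeta mu S x t w - zb t w|)%:E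
        <= (eps ^+ 2 / (4 * m%:R * (t%:R + 1) ^+ 4))%:E)%E)
  (i : 'I_m) :
  (1 - eps / (2 * (t%:R + 1) ^+ 2)) * univ mu S x t i <= univbar mu S zb t i
  /\ 0 < univ mu S x t i.
Proof.
set D := @paramW R k l.
have mD : measurable D := paramW_meas R k l.
have [Sb Sm] := HS.
have Sb' : forall s w j, D w -> 0 <= S s w j <= 1 by move=> s w j Dw; exact: (Sb s w Dw).1.
pose j0 : 'I_m := Ordinal (ltnW hm).
pose cc (s : nat) := eps / (2 * m%:R * (s%:R + 1) ^+ 2).
have m0 : 0 < m%:R :> R by rewrite ltr0n; exact: ltnW hm.
have cc0 s : 0 < cc s.
  by rewrite /cc divr_gt0 //; [case/andP: heps | rewrite !mulr_gt0 // exprn_gt0 // ltr_wpDl].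
pose hi := \prod_(s < t) \sum_(j < m) x s j.
pose lo := \prod_(s < t) (cc s * x s j0).
have Wb w : D w -> 0 < lo <= wealth S x t w /\ wealth S x t w <= hi.
  move=> Dw; split; last first.
    apply: ler_prod => s _; have /andP[d1 d2] := @dot_bounds R m _ _ j0 (Sb' s w ^~ Dw) (Hx s).
    rewrite d2 andbT; apply: le_trans d1; apply: mulr_ge0; first by case/andP: (Sb' s w j0 Dw).
    exact: ltW.
  apply/andP; split; first by apply: prodr_gt0 => s _; apply: mulr_gt0.
  apply: ler_prod => s _; have /andP[d1 d2] := @dot_bounds R m _ _ j0 (Sb' s w ^~ Dw) (Hx s).
  rewrite mulr_ge0 ?(ltW (cc0 s)) ?(ltW (Hx s j0)) //=.
  apply: le_trans d1; apply: ler_wpM2r; first exact: ltW.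
  exact: HL.
have Wm : measurable_fun D (wealth S x t).
  rewrite /wealth; apply: measurable_prod => s _.
  apply: measurable_sum => j.
  exact: (measurable_realfun.measurable_funM (Sm s j) (measurable_cst _)).
have Wi : mu.-integrable D (EFin \o wealth S x t).
  apply: (@bnd_int R _ _ mu D _ hi mD) => // w Dw; have [/andP[l0 l1] h] := Wb w Dw.
  by rewrite ger0_norm //; apply: le_trans (ltW l0) l1.
pose Z := Rintegral mu D (fun w => wealth S x t w).
have [zm [z0 z1]] := Hd.
have muD := @dens_pos R _ _ mu D (zb t) mD zm z0 z1.
have lo0 : 0 < lo by apply: prodr_gt0 => s _; apply: mulr_gt0.
have Z0 : 0 < Z.
  have h := Rintegral_cst mu mD lo.
  apply: (@lt_le_trans _ _ (Rintegral mu D (fun _ => lo))); first by rewrite h mulr_gt0.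
  apply: le_Rintegral => //; first exact: finite_measure_integrable_cst.
  by move=> w Dw; have [/andP[]] := Wb w Dw.
have zi : mu.-integrable D (EFin \o zb t) := @dens_int R _ _ mu D (zb t) mD zm z0 z1.
have zetam : measurable_fun D (zeta mu S x t).
  exact: (measurable_realfun.measurable_funM Wm (measurable_cst _)).
have zetaE w : zeta mu S x t w = wealth S x t w / Z by [].
have zetab w : D w -> 0 <= zeta mu S x t w <= hi / Z.
  move=> Dw; have [/andP[l0 l1] h] := Wb w Dw; rewrite zetaE.
  rewrite divr_ge0 //= ?(ltW Z0) ?(le_trans (ltW l0) l1) //.
  by rewrite ler_wpM2r // invr_ge0 ltW.
have zetai : mu.-integrable D (EFin \o zeta mu S x t).
  apply: (@bnd_int R _ _ mu D _ (hi / Z) mD) => // w Dw.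
  by have /andP[h1 h2] := zetab w Dw; rewrite ger0_norm.
have Szi : mu.-integrable D (EFin \o (fun w => S t w i * zeta mu S x t w)).
  apply: (@bnd_int R _ _ mu D _ (hi / Z) mD).
    exact: (measurable_realfun.measurable_funM (Sm t i) zetam).
  move=> w Dw; have /andP[h1 h2] := zetab w Dw; have /andP[s1 s2] := Sb' t w i Dw.
  rewrite ger0_norm; last exact: mulr_ge0.
  apply: (le_trans _ h2); exact: ler_piMl.
have SWi : mu.-integrable D (EFin \o (fun w => S t w i * wealth S x t w)).
  apply: (@bnd_int R _ _ mu D _ hi mD).
    exact: (measurable_realfun.measurable_funM (Sm t i) Wm).
  move=> w Dw; have [/andP[l0 l1] h] := Wb w Dw; have /andP[s1 s2] := Sb' t w i Dw.
  have W0 : 0 <= wealth S x t w by apply: le_trans (ltW l0) l1.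
  rewrite ger0_norm ?mulr_ge0 //; apply: (le_trans _ h); exact: ler_piMl.
have Szbi : mu.-integrable D (EFin \o (fun w => S t w i * zb t w)).
  apply: (le_integrable mD _ _ zi).
    apply/measurable_realfun.measurable_EFinP.
    exact: (measurable_realfun.measurable_funM (Sm t i) zm).
  move=> w Dw /=; have /andP[s1 s2] := Sb' t w i Dw; rewrite lee_fin.
  rewrite normrM (ger0_norm s1); exact: ler_piMl.
have dfi : mu.-integrable D (EFin \o (fun w => `|zeta mu S x t w - zb t w|)).
  apply: (le_integrable mD _ _ (integrableB mD zetai zi)).
    apply/measurable_realfun.measurable_EFinP.
    apply: (measurableT_comp (@measurable_realfun.normr_measurable R setT)).
    exact: (measurable_realfun.measurable_funB zetam zm).
  by move=> w Dw /=; rewrite normr_id.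
have Uc : cc t <= univ mu S x t i.
  rewrite /univ (ler_pdivlMr _ _ Z0) -(RintegralZl (cc t) mD Wi).
  apply: le_Rintegral => //.
    apply: (@bnd_int R _ _ mu D _ (cc t * hi) mD).
      exact: (measurable_realfun.measurable_funM (measurable_cst _) Wm).
    move=> w Dw; have [/andP[l0 l1] h] := Wb w Dw.
    have W0 : 0 <= wealth S x t w by apply: le_trans (ltW l0) l1.
    rewrite ger0_norm; last by apply: mulr_ge0 => //; exact: ltW (cc0 t).
    by apply: ler_wpM2l; [exact: ltW (cc0 t) | exact: h].
  move=> w Dw; have [/andP[l0 l1] h] := Wb w Dw.
  have W0 : 0 <= wealth S x t w by apply: le_trans (ltW l0) l1.
  by apply: ler_wpM2r => //; exact: HL.
have Ueq : univ mu S x t i = Rintegral mu D (fun w => S t w i * zeta mu S x t w).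
  rewrite /univ -(RintegralZr _ mD SWi); apply: eq_Rintegral => w _.
  by rewrite zetaE mulrA.
have Udiff : univ mu S x t i - univbar mu S zb t i
    <= eps ^+ 2 / (4 * m%:R * (t%:R + 1) ^+ 4).
  rewrite Ueq /univbar -(RintegralB mD Szi Szbi).
  apply: (@le_trans _ _ (Rintegral mu D (fun w => `|zeta mu S x t w - zb t w|))).
    apply: le_Rintegral => //; first exact: intB_EFin.
    move=> w Dw; rewrite -mulrBr; apply: mul_le_abs; exact: Sb'.
  rewrite /Rintegral.
  have hge : (0 <= \int[mu]_(w in D) (`|zeta mu S x t w - zb t w|)%:E)%E.
    by apply: integral_ge0 => w _; rewrite lee_fin normr_ge0.
  move: Hi hge; rewrite -/D.
  by case: (\int[mu]_(w in D) (`|zeta mu S x t w - zb t w|)%:E)%E => [r| |] //=.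
set a := eps / (2 * (t%:R + 1) ^+ 2).
have T0 : (t%:R + 1 : R) != 0 by rewrite lt0r_neq0 // ltr_wpDl.
have ha : eps ^+ 2 / (4 * m%:R * (t%:R + 1) ^+ 4) = cc t * a.
  rewrite /a /cc; field; rewrite ?T0 ?(lt0r_neq0 m0) //.
have a0 : 0 <= a.
  apply: divr_ge0; first by case/andP: heps => /ltW.
  by apply: mulr_ge0 => //; apply: exprn_ge0; apply: ltW; rewrite ltr_wpDl.
have hh : a * cc t <= a * univ mu S x t i by apply: ler_wpM2l.
rewrite ha in Udiff; split; first lra.
exact: lt_le_trans (cc0 t) Uc.
Qed.

Lemma key_ineq (R : realFieldType) (N : R) : 1 <= N ->
  (N ^+ 2)^-1 + 2 / (N + 1) <= 2 / N.
Proof.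
move=> N1.
have N0 : 0 < N by apply: lt_le_trans N1.
have N10 : 0 < N + 1 by apply: addr_gt0.
have e : 2 / N - ((N ^+ 2)^-1 + 2 / (N + 1)) = (N - 1) / (N ^+ 2 * (N + 1)).
  by field; rewrite ?(lt0r_neq0 N0) ?(lt0r_neq0 N10).
rewrite -subr_ge0 e; apply: divr_ge0; first by rewrite subr_ge0.
by apply: mulr_ge0; [exact: exprn_ge0 (ltW N0) | exact: ltW].
Qed.

Lemma sum_sq (R : realFieldType) (n : nat) :
  \sum_(s < n) ((s%:R + 1) ^+ 2)^-1 <= 2 - 2 / (n%:R + 1) :> R.
Proof.
elim: n => [|n IH]; first by rewrite big_ord0 add0r divr1 subrr.
rewrite big_ord_recr /=.
have := @key_ineq R (n%:R + 1).
rewrite lerDr ler0n => /(_ isT) h.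
rewrite (_ : n.+1%:R = n%:R + 1 :> R); last by rewrite natr1.
set N := n%:R + 1 in IH h *.
set A := \sum_(i < n) _ in IH *.
lra.
Qed.

Lemma prod_ge (R : realFieldType) (n : nat) (a : nat -> R) :
  (forall s, 0 <= a s <= 1) ->
  1 - \sum_(s < n) a s <= \prod_(s < n) (1 - a s).
Proof.
move=> ha; elim: n => [|n IH]; first by rewrite big_ord0 big_ord0 subr0.
rewrite big_ord_recr big_ord_recr /=.
have /andP[a0 a1] := ha n.
set A := \sum_(i < n) _ in IH *; set P := \prod_(i < n) _ in IH *.
have h1 : 0 <= (1 - a n) * (P - (1 - A)) by apply: mulr_ge0; rewrite subr_ge0.
have A0 : 0 <= A by apply: sumr_ge0 => i _; have /andP[] := ha i.
have h2 : 0 <= a n * A by apply: mulr_ge0.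
lra.
Qed.
Theorem mainTheorem10 (R : realType) (m k l : nat)
  (hm : (2 <= m)%N) (hk : (0 < k)%N)
  (S : nat -> l.-tuple (k.-tuple R) -> 'I_m -> R)
  (HS : is_strategy S)
  (eps : R) (heps : 0 < eps < 1) (HL : condL eps S)
  (mu : probability (l.-tuple (k.-tuple R)) R) (Hmu : uniform_param mu)
  (zb : (nat -> 'I_m -> R) -> nat -> l.-tuple (k.-tuple R) -> R)
  (Hzb : forall x : nat -> 'I_m -> R, pos_market x -> forall t : nat,
     prob_density mu (zb x t) /\
     (\int[mu]_(w in paramW k l) (`|zeta mu S x t w - zb x t w|)%:E
        <= (eps ^+ 2 / (4 * m%:R * (t%:R + 1) ^+ 4))%:E)%E) :
  (forall x : nat -> 'I_m -> R, pos_market x -> forall n : nat,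
     wealthU (univbar mu S (zb x)) x n >= (1 - eps) * wealthU (univ mu S x) x n)
  /\
  (universalization S (univ mu S) ->
   universalization S (fun x => univbar mu S (zb x))).
Proof.
have part1 : forall x, pos_market x -> forall n,
    (1 - eps) * wealthU (univ mu S x) x n <= wealthU (univbar mu S (zb x)) x n
    /\ 0 < wealthU (univ mu S x) x n.
  move=> x Hx n.
  pose a s := eps / (2 * (s%:R + 1) ^+ 2) : R.
  have st s i := @step R m k l hm S HS eps heps HL mu x Hx (zb x) s
    (Hzb x Hx s).1 (Hzb x Hx s).2 i.
  pose j0 : 'I_m := Ordinal (ltnW hm).
  have dpos s : 0 < dot (univ mu S x s) (x s).
    rewrite /dot (bigD1 j0) //=.
    have h1 : 0 < univ mu S x s j0 * x s j0 := mulr_gt0 (st s j0).2 (Hx s j0).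
    have h2 : 0 <= \sum_(j < m | j != j0) univ mu S x s j * x s j.
      by apply: sumr_ge0 => j _; apply: mulr_ge0; [exact: ltW (st s j).2 | exact: ltW (Hx s j)].
    lra.
  have dle s : (1 - a s) * dot (univ mu S x s) (x s) <= dot (univbar mu S (zb x) s) (x s).
    rewrite /dot mulr_sumr; apply: ler_sum => j _; rewrite mulrA.
    by apply: ler_wpM2r; [exact: ltW (Hx s j) | exact: (st s j).1].
  have T1 s : 1 <= (s%:R + 1 : R) by rewrite lerDr ler0n.
  have ha s : 0 <= a s <= 1.
    have /andP[e0 e1] := heps.
    have hT : 1 <= (s%:R + 1 : R) ^+ 2 by apply: exprn_ege1.
    have d0 : 0 < 2 * (s%:R + 1 : R) ^+ 2 by apply: mulr_gt0 => //; apply: lt_le_trans hT.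
    apply/andP; split; first by apply: divr_ge0 => //; exact: ltW.
    rewrite ler_pdivrMr // mul1r; lra.
  have Wpos : 0 < wealthU (univ mu S x) x n by apply: prodr_gt0 => s _.
  split => //.
  rewrite /wealthU.
  apply: (@le_trans _ _ (\prod_(s < n) ((1 - a s) * dot (univ mu S x s) (x s)))); last first.
    apply: ler_prod => s _; rewrite dle andbT; apply: mulr_ge0; last exact: ltW.
    by have /andP[_ h] := ha s; rewrite subr_ge0.
  rewrite big_split /=; apply: ler_wpM2r; first exact: ltW.
  apply: (le_trans _ (@prod_ge R n a ha)).
  have hs : \sum_(s < n) a s = eps / 2 * \sum_(s < n) ((s%:R + 1) ^+ 2)^-1.
    rewrite mulr_sumr; apply: eq_bigr => s _; rewrite /a; field.
    by rewrite lt0r_neq0 //; apply: lt_le_trans (T1 s).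
  rewrite hs.
  have hb := sum_sq R n.
  have hb2 : 0 <= 2 / (n%:R + 1 : R) by apply: divr_ge0 => //; apply: ltW; apply: lt_le_trans (T1 n).
  have e0 : 0 <= eps / 2 by apply: divr_ge0 => //; case/andP: heps => /ltW.
  have := ler_wpM2l e0 hb.
  have := mulr_ge0 e0 hb2.
  set Q := \sum_(s < n) _.
  lra.
split; first by move=> x Hx n; exact: (part1 x Hx n).1.
move=> [eta [heta H]].
pose c := ln (1 - eps).
exists (eta - (fun n : nat => c * n%:R^-1)).
split.
  have hv : (fun n : nat => c * n%:R^-1) @ \oo --> 0.
    rewrite -cvg_shiftS /=.
    have h := @cvgMl_tmp R nat _ _ harmonic c 0 cvg_harmonic.
    rewrite mulr0 in h; exact: h.
  have h := cvgB heta hv; rewrite subr0 in h; exact: h.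
move=> x Hx n n0.
have [h1 h2] := part1 x Hx n.
have H' := H x Hx n n0.
rewrite /growth in H' *.
have e1 : 0 < 1 - eps by rewrite subr_gt0; case/andP: heps.
have lnle : c + ln (wealthU (univ mu S x) x n) <= ln (wealthU (univbar mu S (zb x)) x n).
  have p1 : 0 < (1 - eps) * wealthU (univ mu S x) x n := mulr_gt0 e1 h2.
  rewrite /c -lnM ?posrE // ler_ln ?posrE //; exact: lt_le_trans p1 h1.
have ninv : 0 <= (n%:R : R)^-1 by rewrite invr_ge0 ler0n.
have := ler_wpM2l ninv lnle.
rewrite /= !fctE.
lra.
Qed.
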